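(* Let $\mathscr X\subset\mathbb R^d$ be compact with $\mathrm{vol}(\mathscr X)>0$, and let $\|\cdot\|$ be any norm on $\mathbb R^d$. Let $\mathbf x_1,\mathbf x_2,\ldots$ be any sequence of pairwise distinct points of $\mathscr X$, and let $\mathbf X_n=\{\mathbf x_1,\ldots,\mathbf x_n\}$. Then $$\limsup_{n\to\infty}\mathsf{MR}(\mathbf X_n)\ge 2.$$ In particular, the uniformity constant satisfies $\mathsf{MR}(\mathbf X_\infty)\ge 2$ for every such sequence $\mathbf X_\infty=\{\mathbf x_1,\mathbf x_2,\ldots\}\subset\mathscr X$.
   Context: For a design (finite set of distinct points) $\mathbf X_n=\{\mathbf x_1,\ldots,\mathbf x_n\}\subset\mathscr X$: - the fill distance is $\mathsf{CR}(\mathbf X_n)=\mathsf{CR}_{\mathscr X}(\mathbf X_n)=\sup_{\mathbf x\in\mathscr X}\min_{\mathbf x_i\in\mathbf X_n}\|\mathbf x-\mathbf x_i\|$; - the separation radius is $\mathsf{SR}(\mathbf X_n)=\tfrac12\min_{\mathbf x_i\neq\mathbf x_j\in\mathbf X_n}\|\mathbf x_i-\mathbf x_j\|$ for $n\ge2$; - the mesh-ratio is $\mathsf{MR}(\mathbf X_n)=\mathsf{CR}(\mathbf X_n)/\mathsf{SR}(\mathbf X_n)$ for $n\ge 2$. The uniformity constant of the sequence $\mathbf X_\infty$ (equivalently of the nested designs $\{\mathbf X_n\}$) is $\mathsf{MR}(\mathbf X_\infty)=\sup_{n\ge2}\mathsf{MR}(\mathbf X_n)$ (possibly $+\infty$).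 *)

(* Defs.v *)
From HB Require Import structures.
From mathcomp Require Import all_boot all_order all_algebra.
From mathcomp Require Import all_classical all_reals all_analysis.
Set Implicit Arguments. Unset Strict Implicit. Unset Printing Implicit Defensive.
Import Order.TTheory GRing.Theory Num.Theory.
Import numFieldNormedType.Exports.
Local Open Scope classical_set_scope.
Local Open Scope ring_scope.

Section Defs.
Variables (R : realType) (d : nat).

Definition is_norm (N : 'rV[R]_d -> R) : Prop :=
  [/\ forall x, N x = 0 -> x = 0,
      forall (a : R) x, N (a *: x) = `|a| * N x
    & forall x y, N (x + y) <= N x + N y].

Definition box (a b : 'rV[R]_d) : set 'rV[R]_d :=
  [set x | forall i : 'I_d, a 0 i <= x 0 i <= b 0 i].
Definition box_vol (a b : 'rV[R]_d) : R :=
  \prod_(i < d) Num.max (b 0 i - a 0 i) 0.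
Definition lebesgue_outer (X : set 'rV[R]_d) : \bar R :=
  ereal_inf [set s | exists a b : nat -> 'rV[R]_d,
     X `<=` \bigcup_k box (a k) (b k) /\
     s = (\sum_(0 <= k <oo) (box_vol (a k) (b k))%:E)%E].

(* Designs X_n = {xs 0, ..., xs (n-1)} (the paper's x_1,...,x_n). *)
Variables (N : 'rV[R]_d -> R) (X : set 'rV[R]_d) (xs : nat -> 'rV[R]_d).

(* min_{x_i in X_n} ||x - x_i||  (meaningful for n >= 1) *)
Definition dist_design (n : nat) (x : 'rV[R]_d) : R :=
  \big[Order.min/N (x - xs 0)]_(i < n) N (x - xs i).

Definition fill_distance (n : nat) : R :=
  sup [set dist_design n x | x in X].

(* separation radius SR(X_n) = 1/2 min_{i <> j} ||x_i - x_j||  (n >= 2) *)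
Definition separation_radius (n : nat) : R :=
  2^-1 * \big[Order.min/N (xs 0 - xs 1)]_(i < n)
           \big[Order.min/N (xs 0 - xs 1)]_(j < n | i != j) N (xs i - xs j).

Definition mesh_ratio (n : nat) : R := fill_distance n / separation_radius n.

End Defs.

(* Main.v *)
Require Import Defs.
From HB Require Import structures.
From mathcomp Require Import all_boot all_order all_algebra.
From mathcomp Require Import all_classical all_reals all_analysis.
Import Order.TTheory GRing.Theory Num.Theory.
Import numFieldNormedType.Exports.
Local Open Scope classical_set_scope.
Local Open Scope ring_scope.
From mathcomp Require Import lra ring zify.
Set Implicit Arguments. Unset Strict Implicit. Unset Printing Implicit Defensive.

Section P.
Variables (R : realType) (d : nat) (N : 'rV[R]_d -> R).
Hypothesis nN : is_norm N.

Lemma N0 : N 0 = 0.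
Proof. case: nN => _ hZ _. by rewrite -(scale0r (0:'rV[R]_d)) hZ normr0 mul0r. Qed.
Lemma NN x : N (- x) = N x.
Proof. case: nN => _ hZ _. by rewrite -scaleN1r hZ normrN normr1 mul1r. Qed.
Lemma Nge0 x : 0 <= N x.
Proof. case: nN => _ _ hD. have := hD x (-x). rewrite subrr N0 NN. lra. Qed.
Lemma Npos x : x != 0 -> 0 < N x.
Proof.
case: nN => h0 _ _ => x0; rewrite lt_neqAle Nge0 andbT eq_sym.
by apply/eqP => /h0 x0'; move: x0; rewrite x0' eqxx.
Qed.
Lemma Nsym x y : N (x - y) = N (y - x).
Proof. by rewrite -NN opprB. Qed.

Lemma coord_le (x : 'rV[R]_d) j : `|x ord0 j| <= `|x|.
Proof.
rewrite [leRHS]/Num.norm /= mx_normrE.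
exact: (le_bigmax _ (fun ij : 'I_1 * 'I_d => `|x ij.1 ij.2|) (ord0, j)).
Qed.

Lemma Nsum (F : 'I_d -> 'rV[R]_d) : N (\sum_j F j) <= \sum_j N (F j).
Proof.
case: nN => _ _ hD.
elim/big_rec2: _ => [|j s1 s2 _ IH]; first by rewrite N0.
by apply: le_trans (hD _ _) _; rewrite lerD2l.
Qed.

Lemma Nupper : exists2 C, 0 <= C & forall x, N x <= C * `|x|.
Proof.
case: nN => _ hZ _.
exists (\sum_(j < d) N (delta_mx 0 j)); first by apply: sumr_ge0 => j _; exact: Nge0.
move=> x; rewrite {1}(matrix_sum_delta x) big_ord1.
apply: le_trans (Nsum _) _.
rewrite mulrC mulr_sumr; apply: ler_sum => j _.
rewrite hZ ler_wpM2r ?Nge0 //.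
exact: coord_le.
Qed.

Lemma Ncont : continuous N.
Proof.
have [C C0 hC] := Nupper.
case: nN => _ _ hD.
move=> x; apply/(@cvgrPdist_le _ _ _ (nbhs x) (nbhs_filter x)) => /= e e0.
apply/nbhs_ballP; exists (e / (C + 1)) => /=; first by rewrite divr_gt0 // ltr_wpDl.
move=> y; rewrite -ball_normE /= => hxy.
have h1 : N (x - y) <= e.
  apply: le_trans (hC _) _.
  have : C * `|x - y| <= C * (e / (C+1)) by rewrite ler_wpM2l // ltW.
  move=> /le_trans; apply.
  rewrite mulrA ler_pdivrMr ?ltr_wpDl //; nra.
rewrite ler_norml; apply/andP; split.
  have := hD (y - x) x; rewrite subrK Nsym; lra.
have := hD (x - y) y; rewrite subrK; lra.
Qed.

Lemma Nlower (v : 'rV[R]_d) : v != 0 -> exists2 c, 0 < c & forall x, c * `|x| <= N x.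
Proof.
move=> v0.
case: nN => _ hZ _.
pose S := [set x : 'rV[R]_d | `|x| = 1].
have unit x : x != 0 -> S (`|x|^-1 *: x).
  move=> x0; rewrite /S /= normrZ ger0_norm ?invr_ge0 // mulVf //.
  by rewrite normr_eq0.
have S0 : S !=set0 by exists (`|v|^-1 *: v); exact: unit.
have cS : compact S.
  apply: bounded_closed_compact.
    exists 1; split; first by rewrite num_real.
    by move=> M M1 x Sx; rewrite /= Sx ltW.
  rewrite (_ : S = (@Num.norm _ _) @^-1` [set 1]) //.
  by apply: (proj1 (continuous_closedP _) (@norm_continuous _ _)); exact: closed_eq.
have [c0 c0S hc0] := EVT_min_rV S0 cS (continuous_subspaceT Ncont).
have c0pos : 0 < N c0.
  apply: Npos; move: c0S; rewrite in_setE /S /= => h.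
  by apply/eqP => c00; move: h; rewrite c00 normr0 => /eqP; rewrite eq_sym oner_eq0.
exists (N c0) => // x.
have [->|x0] := eqVneq x 0; first by rewrite normr0 mulr0 N0.
have hu : N c0 <= N (`|x|^-1 *: x) by apply: hc0; rewrite in_setE; exact: unit.
rewrite hZ ger0_norm ?invr_ge0 // in hu.
have xp : 0 < `|x| by rewrite normr_gt0.
rewrite -(ler_pM2l xp) mulrA mulfV ?gt_eqF // mul1r in hu.
by rewrite mulrC.
Qed.
End P.

Section D.
Variables (R : realType) (d : nat) (N : 'rV[R]_d -> R) (X : set 'rV[R]_d) (xs : nat -> 'rV[R]_d).
Hypotheses (nN : is_norm N) (cX : compact X) (Xxs : forall n, X (xs n))
  (inj : forall m n, m <> n -> xs m <> xs n).

Local Notation dd := (dist_design N xs).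
Local Notation h := (fill_distance N X xs).
Local Notation q := (separation_radius N xs).

Lemma dd_le0 n x : dd n x <= N (x - xs 0%N).
Proof. exact: bigmin_le_id. Qed.

Lemma dd_ge0 n x : 0 <= dd n x.
Proof. apply: le_bigmin => [|i _]; exact: Nge0. Qed.

Lemma dd_cover n x e : (0 < n)%N -> dd n x <= e ->
  exists2 i, (i < n)%N & N (x - xs i) <= e.
Proof.
move=> n0 hd.
case: (pselect (exists2 i, (i < n)%N & N (x - xs i) <= e)) => // hn.
exfalso; move: hd; apply/negP; rewrite -ltNge.
have hlt i : (i < n)%N -> e < N (x - xs i).
  move=> ilt; rewrite ltNge; apply/negP => hle; apply: hn; by exists i.
apply/bigmin_gtP; split; first exact: hlt.
by move=> i _; exact: hlt.
Qed.

Lemma FD_has_sup n : has_sup [set dd n x | x in X].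
Proof.
split; first by exists (dd n (xs 0%N)); exists (xs 0%N).
have [C C0 hC] := Nupper nN.
have [M [_ hM]] := compact_bounded cX.
exists (C * (`|M| + 1 + `|xs 0%N|)) => _ [x Xx <-].
apply: le_trans (dd_le0 _ _) _.
apply: le_trans (hC _) _.
rewrite ler_wpM2l //.
apply: le_trans (ler_normB _ _) _.
rewrite lerD2r.
have := hM (`|M| + 1) _ x Xx; apply.
have := real_ler_norm (num_real M); lra.
Qed.

Lemma FD_ub n x : X x -> dd n x <= h n.
Proof. by move=> Xx; apply: sup_upper_bound; [exact: FD_has_sup| exists x]. Qed.

Lemma FD_ge0 n : 0 <= h n.
Proof. exact: le_trans (dd_ge0 n (xs 0%N)) (FD_ub n (Xxs 0%N)). Qed.

Lemma Ndiff i j : i <> j -> 0 < N (xs i - xs j).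
Proof. by move=> ij; apply: (Npos nN); rewrite subr_eq0; apply/eqP; exact: inj. Qed.

Lemma SR_pos n : 0 < q n.
Proof.
rewrite /separation_radius mulr_gt0 ?invr_gt0 //.
have h01 : 0 < N (xs 0%N - xs 1%N) by exact: Ndiff.
apply: lt_bigmin => // i _; apply: lt_bigmin => // j ij.
by apply: Ndiff => /val_inj/eqP; rewrite (negbTE ij).
Qed.

Lemma SR_le n i j : (i < n)%N -> (j < n)%N -> i <> j ->
  q n <= 2^-1 * N (xs i - xs j).
Proof.
move=> ilt jlt ij; rewrite /separation_radius ler_wpM2l ?invr_ge0 //.
apply: (bigmin_inf (Ordinal ilt)) => //.
apply: (bigmin_inf (Ordinal jlt)) => //.
by apply/eqP => /(congr1 val) /=.
Qed.

Lemma step n : (0 < n)%N -> q n.+1 <= 2^-1 * h n.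
Proof.
move=> n0.
have [i ilt hi] := dd_cover n0 (FD_ub n (Xxs n)).
apply: le_trans (SR_le (ltnSn n) (ltnW ilt) _) _.
  by move=> ni; move: ilt; rewrite -ni ltnn.
by rewrite ler_wpM2l ?invr_ge0.
Qed.


Lemma measure_bound c : 0 < c -> (forall x, c * `|x| <= N x) -> (0 < d)%N ->
  forall n, (0 < n)%N ->
  (lebesgue_outer X <= (n%:R * (2 * h n / c) ^+ d)%:E)%E.
Proof.
move=> c0 hc d0 n n0.
set t := h n / c.
have t0 : 0 <= t by rewrite divr_ge0 ?FD_ge0 // ltW.
pose a k := if (k < n)%N then xs k - const_mx t else 0.
pose b k := if (k < n)%N then xs k + const_mx t else 0.
have hs : (lebesgue_outer X <= \sum_(0 <= k <oo) (box_vol (a k) (b k))%:E)%E.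
  apply: ereal_inf_lbound; exists a, b; split => //.
  move=> x Xx.
  have [i ilt hi] := dd_cover n0 (FD_ub n Xx).
  exists i => //; rewrite /box /a /b ilt /= => j.
  rewrite !mxE.
  have := coord_le (x - xs i) j; rewrite !mxE => hj.
  have o0 : (0 : 'I_1) = ord0 by apply/val_inj.
  have hj' : `|x 0 j - xs i 0 j| <= t.
    rewrite o0; apply: le_trans hj _.
    rewrite /t ler_pdivlMr // mulrC.
    exact: le_trans (hc _) hi.
  move: hj'; rewrite ler_norml; move=> /andP[h1 h2].
  apply/andP; split; lra.
apply: le_trans hs _.
rewrite (nneseries_split 0 n); last by move=> k _; rewrite lee_fin /box_vol; apply: prodr_ge0 => i _; rewrite le_max lexx orbT.
rewrite eseries0 ?adde0; last first.
  move=> k; rewrite add0n => nk _; rewrite /a /b ltnNge nk /= /box_vol.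
  rewrite (eq_bigr (fun=> 0)); last by move=> i _; rewrite !mxE subrr maxxx.
  by rewrite prodr_const card_ord expr0n -(prednK d0).
rewrite sumEFin lee_fin add0n.
rewrite (eq_big_nat _ _ (F2 := fun=> (2 * t) ^+ d)); last first.
  move=> k /andP[_ kn]; rewrite /a /b kn /box_vol.
  rewrite (eq_bigr (fun=> 2 * t)); last first.
    move=> i _; rewrite !mxE; rewrite max_l; first by ring.
    lra.
  by rewrite prodr_const card_ord.
rewrite sumr_const_nat subn0 mulr_natl /t -mulr_natl mulrA.
set A := (2 * h n / c) ^+ d. by rewrite mulr_natl.
Qed.

End D.
Lemma geom_small (R : realType) (r e : R) (n0 : nat) : 0 <= r -> r < 1 -> 0 < e ->
  exists k, (n0 + k)%:R * r ^+ k <= e.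
Proof.
move=> r0 r1 e0.
set sg := (1 + r) / 2.
have sg0 : 0 < sg by rewrite /sg; lra.
have sg1 : sg < 1 by rewrite /sg; lra.
have rsg : r <= sg * sg by rewrite /sg; nra.
set s := sg^-1 - 1.
have s0 : 0 < s by rewrite /s subr_gt0 invf_gt1.
have sgs : sg * (1 + s) = 1 by rewrite /s addrC subrK mulfV ?gt_eqF.
have bern k : 1 + k%:R * s <= (1 + s) ^+ k.
  elim: k => [|k IH]; first by rewrite mul0r addr0 expr0.
  rewrite exprS -natr1.
  have : (1 + s) * (1 + k%:R * s) <= (1 + s) * (1 + s) ^+ k by rewrite ler_pM2l //; lra.
  apply: le_trans.
  have : 0 <= k%:R * s * s by apply: mulr_ge0; [apply: mulr_ge0 => //; exact: ltW| exact: ltW].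
  lra.
have hu k : sg ^+ k * (k%:R * s) <= 1.
  have : sg ^+ k * (1 + k%:R * s) <= sg ^+ k * (1 + s) ^+ k by rewrite ler_pM2l // exprn_gt0.
  rewrite -exprMn sgs expr1n.
  have : 0 <= sg ^+ k by rewrite exprn_ge0 // ltW.
  nra.
have hr k : r ^+ k <= sg ^+ k * sg ^+ k.
  elim: k => [|k IH]; first by rewrite !expr0 mulr1.
  rewrite !exprS.
  have : 0 <= r ^+ k by rewrite exprn_ge0.
  have : 0 <= sg ^+ k by rewrite exprn_ge0 // ltW.
  nra.
pose m := (Num.Def.archi_bound (2 / (e * (s * s)))).+1.
have hm : 2 / (e * (s * s)) < m%:R.
  apply: lt_le_trans (archi_boundP _) _; first by rewrite divr_ge0 // mulr_ge0 // ltW // mulr_gt0.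
  by rewrite ler_nat.
exists (n0 + m)%N.
set k := (n0 + m)%N.
have kpos : 0 < k%:R :> R by rewrite ltr0n /k addnS.
have h2k : (n0 + k)%:R <= 2 * k%:R :> R.
  by rewrite -natrM ler_nat /k; lia.
have hke : 2 <= e * (s * s) * k%:R.
  have : m%:R <= k%:R :> R by rewrite ler_nat leq_addl.
  rewrite ltr_pdivrMr in hm; last by rewrite mulr_gt0 // mulr_gt0.
  have : 0 < e * (s * s) by rewrite mulr_gt0 // mulr_gt0.
  nra.
set u := sg ^+ k.
have u0 : 0 <= u by rewrite exprn_ge0 // ltW.
have hu' := hu k; rewrite -/u in hu'.
have hr' := hr k; rewrite -/u in hr'.
have rk0 : 0 <= r ^+ k by rewrite exprn_ge0.
apply: le_trans (_ : 2 * k%:R * (u * u) <= e).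
  apply: le_trans (_ : 2 * k%:R * r ^+ k <= _).
    nra.
  by apply: ler_wpM2l hr'; rewrite mulr_ge0 // ltW.
have ks : 0 < k%:R * (s * s) by rewrite mulr_gt0 // mulr_gt0.
rewrite -(ler_pM2r ks).
have -> : 2 * k%:R * (u * u) * (k%:R * (s * s)) = 2 * ((u * (k%:R * s)) * (u * (k%:R * s))) by ring.
have h01 : 0 <= u * (k%:R * s) by rewrite mulr_ge0 // mulr_ge0 // ltW.
have : (u * (k%:R * s)) * (u * (k%:R * s)) <= 1 by nra.
nra.
Qed.

Lemma pow_mono (R : realType) (x y : R) k : 0 <= x -> x <= y -> x ^+ k <= y ^+ k.
Proof.
move=> x0 xy; elim: k => [|k IH]; first by rewrite !expr0.
by rewrite !exprS; apply: ler_pM => //; rewrite exprn_ge0.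
Qed.

Lemma key (R : realType) (d : nat) (X : set 'rV[R]_d)
  (N : 'rV[R]_d -> R) (xs : nat -> 'rV[R]_d) :
  compact X ->
  (0 < lebesgue_outer X)%E ->
  is_norm N ->
  (forall n, X (xs n)) ->
  (forall m n, m <> n -> xs m <> xs n) ->
  forall n0 r, r < 2 -> exists2 k, (n0 <= k)%N & r < mesh_ratio N X xs k.
Proof.
move=> cX Lpos nN Xxs inj n0 r r2.
have d0 : (0 < d)%N.
  rewrite lt0n; apply/negP => /eqP d0; apply: (inj 0%N 1%N) => //.
  apply/rowP => j; exfalso; have := ltn_ord j; move: (nat_of_ord j) => jj; by rewrite d0.
have v0 : xs 0%N - xs 1%N != 0 by rewrite subr_eq0; apply/eqP; exact: inj.
have [c c0 hc] := Nlower nN v0.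
case: (pselect (exists2 k, (n0 <= k)%N & r < mesh_ratio N X xs k)) => // hno.
exfalso.
have hle k : (n0 <= k)%N -> mesh_ratio N X xs k <= r.
  move=> kn; rewrite leNgt; apply/negP => hk; apply: hno; by exists k.
set rho := Num.max (r / 2) 0.
have rho0 : 0 <= rho by rewrite le_max lexx orbT.
have rho1 : rho < 1 by rewrite gt_max; apply/andP; split => //; lra.
have r2rho : r <= 2 * rho.
  have : r / 2 <= rho by rewrite le_max lexx.
  lra.
set n1 := n0.+1.
have rec k : (n1 <= k)%N -> fill_distance N X xs k.+1 <= rho * fill_distance N X xs k.
  move=> kn.
  have qp := SR_pos nN inj k.+1.
  have hm : mesh_ratio N X xs k.+1 <= r by apply: hle; apply: leq_trans (ltnW kn) (leqnSn k).
  rewrite /mesh_ratio ler_pdivrMr // in hm.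
  have hs := step nN cX Xxs (leq_trans (ltn0Sn n0) kn).
  have := FD_ge0 nN cX Xxs k.
  nra.
have geo k : fill_distance N X xs (n1 + k) <= rho ^+ k * fill_distance N X xs n1.
  elim: k => [|k IH]; first by rewrite addn0 expr0 mul1r.
  rewrite addnS; apply: le_trans (rec _ (leq_addr _ _)) _.
  by rewrite exprS -mulrA ler_wpM2l.
set H := fill_distance N X xs n1.
have H0 : 0 <= H by exact: FD_ge0.
have [d' dE] : exists d', d = d'.+1 by exists d.-1; rewrite prednK.
set K := 2 * H / c * (2 * H / c) ^+ d'.
have K0 : 0 <= K by rewrite mulr_ge0 // ?exprn_ge0 // divr_ge0 // ?mulr_ge0 // ltW.
have bnd k : (lebesgue_outer X <= ((n1 + k)%:R * rho ^+ k * K)%:E)%E.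
  apply: le_trans (measure_bound nN cX Xxs c0 hc d0 (ltn0Sn (n0 + k))) _.
  rewrite lee_fin /n1 addSn -[in leRHS]mulrA ler_wpM2l //.
  set hk := fill_distance N X xs (n0 + k).+1.
  have hk0 : 0 <= hk by exact: FD_ge0.
  have hkH : hk <= rho ^+ k * H by exact: geo.
  have rk1 : rho ^+ k <= 1 by rewrite exprn_ile1 // ltW.
  have rk0 : 0 <= rho ^+ k by rewrite exprn_ge0.
  have hkH' : hk <= H by nra.
  rewrite dE exprS /K mulrA.
  apply: ler_pM.
  - by rewrite divr_ge0 ?mulr_ge0 // ltW.
  - by rewrite exprn_ge0 // divr_ge0 ?mulr_ge0 // ltW.
  - have e1 : 2 * hk / c = 2 / c * hk by ring.
    have e2 : rho ^+ k * (2 * H / c) = 2 / c * (rho ^+ k * H) by ring.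
    by rewrite e1 e2 ler_wpM2l // divr_ge0 // ltW.
  - apply: pow_mono; first by rewrite divr_ge0 ?mulr_ge0 // ltW.
    apply: ler_wpM2r; first by rewrite invr_ge0 ltW.
    by apply: ler_wpM2l.
move: Lpos (bnd 0%N); case: (lebesgue_outer X) (bnd) => [m| |] //= bndm; rewrite lte_fin => m0 _.
have [k hk] := geom_small n1 rho0 rho1 (divr_gt0 m0 (ltr_wpDl K0 ltr01)).
have := bndm k; rewrite lee_fin.
have : (n1 + k)%:R * rho ^+ k * K <= m / (K + 1) * K by rewrite ler_wpM2r.
have : m / (K + 1) * K < m.
  rewrite mulrAC ltr_pdivrMr ?ltr_wpDl //; nra.
lra.
Qed.

Unset Implicit Arguments.

Theorem theorem1 (R : realType) (d : nat) (X : set 'rV[R]_d)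
  (N : 'rV[R]_d -> R) (xs : nat -> 'rV[R]_d) :
  compact X ->
  (0 < lebesgue_outer X)%E ->
  is_norm N ->
  (forall n, X (xs n)) ->
  (forall m n, m <> n -> xs m <> xs n) ->
  (2%:E <= limn_esup (fun n => (mesh_ratio N X xs n)%:E))%E.
Proof.
move=> cX Lpos nN Xxs inj.
have K := key cX Lpos nN Xxs inj.
rewrite limn_esup_lim; apply: lime_ge; first exact: is_cvg_esups.
apply: nearW => n; rewrite /esups /=.
rewrite leNgt; apply/negP => hlt.
have ub k : (n <= k)%N -> ((mesh_ratio N X xs k)%:E <= ereal_sup (sdrop (fun n => (mesh_ratio N X xs n)%:E) n))%E.
  by move=> nk; apply: ereal_sup_ubound; exists k.
move: hlt ub; case: (ereal_sup _) => [s| |] //= hlt ub.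
- rewrite lte_fin in hlt.
  have [k nk hk] := K n s hlt.
  by have := ub k nk; rewrite lee_fin leNgt hk.
- by have := ub n (leqnn n).
Qed.
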